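(* Let $\Gamma\subset\mathbf{Z}^n$ be an almost periodic pattern, $\varepsilon>0$, $\delta>0$ and $A\in GL_n(\mathbf{R})$. Then there exist $R_{\varepsilon,\delta}>0$ and a relatively dense set $\widetilde{\mathcal N}_{\varepsilon,\delta}$ such that: for all $R\ge R_{\varepsilon,\delta}$ and all $v\in\widetilde{\mathcal N}_{\varepsilon,\delta}$, $D_R^+\big((\Gamma+v)\Delta\Gamma\big)<\varepsilon$; for every $v\in\widetilde{\mathcal N}_{\varepsilon,\delta}$, $d_\infty(Av,\mathbf{Z}^n)<\delta$; and for every $i\in I_\mathbf{Q}(A)$ and every $v\in\widetilde{\mathcal N}_{\varepsilon,\delta}$, $(Av)_i\in\mathbf{Z}$.
   Context: Balls are for the sup norm: $B(x,R)=\{y:\max_i|x_i-y_i|<R\}$; $d_\infty$ is the distance induced by the sup norm. Relatively dense: there is $R_0>0$ such that every ball of radius at least $R_0$ meets the set; uniformly discrete: there is $r>0$ such that every ball of radius at most $r$ contains at most one point; Delone: both. $D_R^+(\Gamma)=\sup_{x\in\mathbf{R}^n}\frac{\operatorname{Card}(B(x,R)\cap\Gamma)}{\operatorname{Card}(B(x,R)\cap\mathbf{Z}^n)}$. A Delone set $\Gamma\subset\mathbf{Z}^n$ is an almost periodic pattern if for every $\varepsilon>0$ there exist $R_\varepsilon>0$ and a relatively dense set $\mathcal N_\varepsilon$ with $D_R^+((\Gamma+v)\Delta\Gamma)<\varepsilon$ for all $R\ge R_\varepsilon$, $v\in\mathcal N_\varepsilon$. For $A=(a_{i,j})\in GL_n(\mathbf{R})$,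 $I_\mathbf{Q}(A)$ is the set of row indices $i$ such that $a_{i,j}\in\mathbf{Q}$ for every $j\in\{1,\dots,n\}$. *)

(* Defs.v *)
From HB Require Import structures.
From mathcomp Require Import all_boot all_order all_algebra.
From mathcomp Require Import all_classical all_reals.
From mathcomp Require Import finmap.
Set Implicit Arguments. Unset Strict Implicit. Unset Printing Implicit Defensive.
Import Order.TTheory GRing.Theory Num.Theory.
Local Open Scope ring_scope.
Local Open Scope classical_set_scope.

Definition intv (R : realType) (n : nat) (z : 'cV[int]_n) : 'cV[R]_n :=
  map_mx (fun k : int => k%:~R) z.

Definition supnorm (R : realType) (n : nat) (x : 'cV[R]_n) : R :=
  \big[Num.max/0]_(i < n) `|x i 0|.

Definition zball (R : realType) (n : nat) (x : 'cV[R]_n) (r : R) : set 'cV[int]_n :=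
  [set z | supnorm (x - intv R z) < r].

Definition relatively_dense (R : realType) (n : nat) (S : set 'cV[int]_n) : Prop :=
  exists R0 : R, 0 < R0 /\
    forall (x : 'cV[R]_n) (r : R), R0 <= r -> (zball x r `&` S) !=set0.

Definition uniformly_discrete (R : realType) (n : nat) (S : set 'cV[int]_n) : Prop :=
  exists r0 : R, 0 < r0 /\
    forall (x : 'cV[R]_n) (r : R), r <= r0 ->
      forall y z, (zball x r `&` S) y -> (zball x r `&` S) z -> y = z.

Definition delone (R : realType) (n : nat) (S : set 'cV[int]_n) : Prop :=
  relatively_dense R S /\ uniformly_discrete R S.

Definition densUp (R : realType) (n : nat) (r : R) (S : set 'cV[int]_n) : R :=
  sup [set d : R | exists x : 'cV[R]_n,
        d = ((#|` fset_set (zball x r `&` S)|)%fset%:R / (#|` fset_set (zball x r)|)%fset%:R)].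

Definition translate (n : nat) (S : set 'cV[int]_n) (v : 'cV[int]_n) : set 'cV[int]_n :=
  [set g + v | g in S].

Definition symdiff (T : Type) (A B : set T) : set T := (A `\` B) `|` (B `\` A).

Definition almost_periodic_pattern (R : realType) (n : nat) (G : set 'cV[int]_n) : Prop :=
  delone R G /\
  forall eps : R, 0 < eps ->
    exists Re : R, 0 < Re /\ exists N : set 'cV[int]_n, relatively_dense R N /\
      forall r : R, Re <= r -> forall v, N v ->
        densUp r (symdiff (translate G v) G) < eps.

Definition dist_Zn (R : realType) (n : nat) (x : 'cV[R]_n) : R :=
  inf [set d : R | exists z : 'cV[int]_n, d = supnorm (x - intv R z)].

Definition in_IQ (R : realType) (n : nat) (A : 'M[R]_n) (i : 'I_n) : Prop :=
  forall j : 'I_n, exists q : rat, A i j = ratr q.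

(* Main.v *)
Require Import Defs.
From HB Require Import structures.
From mathcomp Require Import all_boot all_order all_algebra.
From mathcomp Require Import all_classical all_reals.
From mathcomp Require Import finmap lra zify.
Import Order.TTheory GRing.Theory Num.Theory.
Local Open Scope ring_scope.
Local Open Scope classical_set_scope.

Module Helpers.
Set Implicit Arguments. Unset Strict Implicit.

Section H.
Variables (R : realType) (n : nat).

Lemma intvD (z w : 'cV[int]_n) : intv R (z + w) = intv R z + intv R w.
Proof. by apply/matrixP => i j; rewrite !mxE intrD. Qed.

Lemma intvN (z : 'cV[int]_n) : intv R (- z) = - intv R z.
Proof. by apply/matrixP => i j; rewrite !mxE intrN. Qed.

Lemma intvB (z w : 'cV[int]_n) : intv R (z - w) = intv R z - intv R w.
Proof. by rewrite intvD intvN. Qed.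

Lemma supnorm_ge0 (x : 'cV[R]_n) : 0 <= supnorm x.
Proof. by rewrite /supnorm; apply: (big_ind (fun y => 0 <= y)) => // a b ha hb; rewrite le_max ha. Qed.

Lemma coord_le_supnorm (x : 'cV[R]_n) i : `|x i 0| <= supnorm x.
Proof. exact: le_bigmax. Qed.

Lemma supnorm_le (x : 'cV[R]_n) c : 0 <= c -> (forall i, `|x i 0| <= c) -> supnorm x <= c.
Proof. by move=> c0 h; apply: bigmax_le. Qed.

Lemma supnorm_lt (x : 'cV[R]_n) c : 0 < c -> (forall i, `|x i 0| < c) -> supnorm x < c.
Proof.
move=> c0 h; rewrite /supnorm; apply: (big_ind (fun y => y < c)) => // a b ha hb.
by rewrite gt_max ha hb.
Qed.

Lemma supnormD (x y : 'cV[R]_n) : supnorm (x + y) <= supnorm x + supnorm y.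
Proof.
apply: supnorm_le; first by rewrite addr_ge0 // supnorm_ge0.
move=> i; rewrite mxE; apply: (le_trans (ler_normD _ _)).
by apply: lerD; apply: coord_le_supnorm.
Qed.

Lemma supnormN (x : 'cV[R]_n) : supnorm (- x) = supnorm x.
Proof. by rewrite /supnorm; apply: eq_bigr => i _; rewrite mxE normrN. Qed.
End H.


Section H.
Variables (R : realType) (n : nat).

Lemma finite_zball (x : 'cV[R]_n) (r : R) : finite_set (zball x r).
Proof.
set M := (Num.trunc (supnorm x + r)).+1.
have hM : forall z, zball x r z -> forall i, (`|z i 0| < M%:Z)%R.
  move=> z hz i.
  have : `|(z i 0)%:~R : R| < M%:R.
    apply: (le_lt_trans _ (truncnS_gt _)).
    have -> : (z i 0)%:~R = x i 0 - (x - intv R z) i 0 :> R.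
      by rewrite !mxE opprB addrC subrK.
    apply: (le_trans (ler_normB _ _)); apply: lerD; first exact: coord_le_supnorm.
    by apply: le_trans (coord_le_supnorm _ i) _; apply: ltW.
  by move=> h; rewrite -(ltr_int R) intr_norm.
pose g := fun f : {ffun 'I_n -> 'I_(M + M).+1} => \col_i (((f i : nat)%:Z - M%:Z) : int).
apply: (sub_finite_set (B := range g)); last exact/finite_image/finite_finset.
move=> z hz; exists [ffun i => inord (absz (z i 0 + M%:Z))] => //.
apply/matrixP => i j; rewrite !mxE ffunE (ord1 j).
have h := hM z hz i.
have hp : (0 <= z i 0 + M%:Z)%R.
  by rewrite -lerBlDr sub0r; move: h; rewrite ltr_norml => /andP[/ltW].
rewrite inordK; first by rewrite (gez0_abs hp) addrK.
rewrite ltnS -lez_nat (gez0_abs hp) PoszD lerD2r.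
by move: h; rewrite ltr_norml => /andP[_ /ltW].
Qed.
End H.


Lemma card_sub (T : choiceType) (A B : set T) :
  finite_set B -> A `<=` B -> (#|` fset_set A| <= #|` fset_set B|)%N.
Proof.
move=> fB AB; apply: fsubset_leq_card.
by rewrite -fset_set_sub //; apply: sub_finite_set fB.
Qed.

Lemma card_inj (T U : choiceType) (A : set T) (B : set U) (f : T -> U) :
  finite_set A -> finite_set B -> injective f -> f @` A `<=` B ->
  (#|` fset_set A| <= #|` fset_set B|)%N.
Proof.
move=> fA fB inj sAB.
have -> : #|` fset_set A| = #|` (f @` fset_set A)%fset|.
  by apply/esym/eqP/card_in_imfsetP => x y _ _; apply: inj.
rewrite -fset_set_image //; exact: card_sub.
Qed.

Lemma card_U (T : choiceType) (A B : set T) : finite_set A -> finite_set B ->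
  (#|` fset_set (A `|` B)| <= #|` fset_set A| + #|` fset_set B|)%N.
Proof. by move=> fA fB; rewrite fset_setU //; apply: leq_card_fsetU. Qed.

Section D.
Variables (R : realType) (n : nat).
Implicit Types (x : 'cV[R]_n) (S : set 'cV[int]_n) (r : R).

Definition ratio r x S : R :=
  (#|` fset_set (zball x r `&` S)|)%fset%:R / (#|` fset_set (zball x r)|)%fset%:R.

Lemma ratio_ge0 r x S : 0 <= ratio r x S.
Proof. by rewrite /ratio divr_ge0. Qed.

Lemma ratio_le1 r x S : ratio r x S <= 1.
Proof.
rewrite /ratio; have [->|h] := eqVneq (#|` fset_set (zball x r)|)%fset 0%N.
  by rewrite invr0 mulr0.
rewrite ler_pdivrMr ?ltr0n ?lt0n // mul1r ler_nat.
apply: card_sub; first exact: finite_zball.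
by move=> z [].
Qed.

Lemma ratio_le_dens r x S : ratio r x S <= densUp r S.
Proof.
apply: ub_le_sup; last by exists x.
by exists 1 => _ [y ->]; apply: ratio_le1.
Qed.

Lemma dens_le r S c : (forall x, ratio r x S <= c) -> densUp r S <= c.
Proof.
move=> h; apply: ge_sup; first by exists (ratio r 0 S); exists 0.
by move=> _ [y ->]; apply: h.
Qed.

Lemma zball_shift x r (w z : 'cV[int]_n) :
  zball x r z -> zball (x + intv R w) r (z + w).
Proof.
by rewrite /zball /= intvD opprD addrACA subrr addr0.
Qed.

Lemma ratio_shift r x S S1 S2 (w : 'cV[int]_n) :
  (forall z, S z -> S1 (z + w) \/ S2 (z + w)) ->
  ratio r x S <= ratio r (x + intv R w) S1 + ratio r (x + intv R w) S2.
Proof.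
move=> hS.
set x' := x + intv R w.
have fz := @finite_zball R n.
have inj : injective (fun z : 'cV[int]_n => z + w) by apply: addIr.
have den : #|` fset_set (zball x r)| = #|` fset_set (zball x' r)|.
  apply/eqP; rewrite eqn_leq; apply/andP; split.
    apply: (card_inj (fz _ _) (fz _ _) inj); move=> _ [z hz <-]; exact: zball_shift.
  have inj' : injective (fun z : 'cV[int]_n => z + (- w)) by apply: addIr.
  apply: (@card_inj _ _ (zball x' r) (zball x r) _ (fz _ _) (fz _ _) inj'); move=> _ [z hz <-].
  have := zball_shift (- w) hz; rewrite /x' -addrA -intvD subrr.
  have -> : intv R (0 : 'cV[int]_n) = 0 by apply/matrixP => i j; rewrite !mxE.
  by rewrite addr0.
rewrite /ratio den -mulrDl ler_wpM2r ?invr_ge0 // -natrD ler_nat.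
apply: (@leq_trans #|` fset_set (zball x' r `&` (S1 `|` S2))|).
  apply: (card_inj _ _ inj).
  - by apply: sub_finite_set (fz x r) => z [].
  - by apply: sub_finite_set (fz x' r) => z [].
  - by move=> _ [z [hz hs] <-]; split; [apply: zball_shift | apply: hS].
rewrite setIUr; apply: card_U.
  by apply: sub_finite_set (fz x' r) => z [].
by apply: sub_finite_set (fz x' r) => z [].
Qed.
End D.


Lemma translateP n (G : set 'cV[int]_n) v y : translate G v y <-> G (y - v).
Proof.
split; first by move=> [g hg <-]; rewrite addrK.
by move=> h; exists (y - v) => //; rewrite subrK.
Qed.

Lemma symdiff_shift n (G : set 'cV[int]_n) v w z :
  symdiff (translate G (v - w)) G z ->
  symdiff (translate G v) G (z + w) \/ symdiff (translate G w) G (z + w).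
Proof.
have e1 : (z + w - v) = z - (v - w) by rewrite opprB addrA.
case=> -[h1 h2].
  move/translateP: h1; rewrite -e1 => h1.
  have [Gzw|nGzw] := pselect (G (z + w)).
    right; right; split => //; move/translateP; rewrite addrK.
    done.
  left; left; split => //; apply/translateP.
  done.
move=> /=. have h2' : ~ G (z + w - v) by rewrite e1 => /translateP.
have [Gzw|nGzw] := pselect (G (z + w)).
  left; right; split => // /translateP; done.
right; left; split => //; apply/translateP; rewrite addrK.
done.
Qed.

Lemma dens_diff (R : realType) n (G : set 'cV[int]_n) (r e : R) v w :
  densUp r (symdiff (translate G v) G) < e / 2 ->
  densUp r (symdiff (translate G w) G) < e / 2 ->
  densUp r (symdiff (translate G (v - w)) G) < e.
Proof.
move=> hv hw.
apply: (le_lt_trans (y := densUp r (symdiff (translate G v) G) + densUp r (symdiff (translate G w) G))).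
  apply: dens_le => x; apply: le_trans (ratio_shift _ _ (w := w) (@symdiff_shift _ G v w)) _.
  by apply: lerD; apply: ratio_le_dens.
by rewrite (splitr e); apply: ltrD.
Qed.


Lemma common_den (s : seq rat) : exists D : nat, (0 < D)%N /\
  forall q, q \in s -> exists k : int, D%:R * q = k%:~R.
Proof.
elim: s => [|q s [D [D0 hD]]]; first by exists 1%N.
exists (D * `|denq q|)%N; split; first by rewrite muln_gt0 D0 absz_gt0 denq_neq0.
move=> q'; rewrite inE => /orP[/eqP ->|/hD [k hk]].
  exists (D%:Z * numq q); rewrite natrM -mulrA.
  have -> : (`|denq q|%N)%:R * q = (numq q)%:~R.
    rewrite natr_absz gtr0_norm ?denq_gt0 // -[X in _ * X](divq_num_den q).
    by rewrite mulrC divfK // intr_eq0 denq_neq0.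
  by rewrite intrM.
exists (k * `|denq q|%N); rewrite natrM mulrAC hk intrM.
by rewrite pmulrn.
Qed.

Lemma row_int (R : realType) n (A : 'M[R]_n) (D : R) i :
  (forall j, exists k : int, D * A i j = k%:~R) ->
  forall v : 'cV[int]_n, exists k : int, D * (A *m intv R v) i 0 = k%:~R.
Proof.
move=> h v; case: (boolp.choice h) => kf hk.
exists (\sum_j kf j * v j 0); rewrite mxE mulr_sumr rmorph_sum.
by apply: eq_bigr => j _; rewrite mxE mulrA hk rmorphM.
Qed.


Section B.
Variables (R : realType) (K : nat).
Let Kr : R := (K.+1)%:R.

Definition fracr (a : R) := a - (Num.floor a)%:~R.
Definition bin (a : R) : nat := absz (Num.floor (Kr * fracr a)).

Lemma fracr_ge0 a : 0 <= fracr a.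
Proof. by rewrite /fracr subr_ge0 floor_le. Qed.

Lemma fracr_lt1 a : fracr a < 1.
Proof. by rewrite /fracr ltrBlDr addrC -[1]/((1 : int)%:~R) -intrD floorD1_gt. Qed.

Lemma Kr_gt0 : 0 < Kr. Proof. by rewrite /Kr ltr0n. Qed.

Lemma floorK_ge0 a : (0 <= Num.floor (Kr * fracr a))%R.
Proof. by rewrite floor_ge0 mulr_ge0 ?fracr_ge0 // ltW // Kr_gt0. Qed.

Lemma bin_lt a : (bin a < K.+1)%N.
Proof.
rewrite /bin -ltz_nat (gez0_abs (floorK_ge0 a)) -(ltr_int R).
apply: le_lt_trans (floor_le _) _.
rewrite -[X in _ < X]/Kr -[X in _ < X]mulr1 ltr_pM2l ?Kr_gt0 //; exact: fracr_lt1.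
Qed.

Lemma bin_eq a b : bin a = bin b ->
  `|a - b - (Num.floor a - Num.floor b)%:~R| < Kr^-1.
Proof.
rewrite /bin => /(congr1 Posz); rewrite !gez0_abs ?floorK_ge0 // => e.
have h1 := floor_le (Kr * fracr a); have h2 := floorD1_gt (Kr * fracr a).
have h3 := floor_le (Kr * fracr b); have h4 := floorD1_gt (Kr * fracr b).
rewrite e in h1 h2; rewrite intrD in h2 h4.
have -> : a - b - (Num.floor a - Num.floor b)%:~R = fracr a - fracr b.
  by rewrite /fracr intrB; lra.
rewrite -[Kr^-1]mul1r ltr_pdivlMr ?Kr_gt0 // -(ger0_norm (ltW Kr_gt0)) -normrM.
rewrite mulrC mulrBr ltr_norml.
have e1 : (1%:~R : R) = 1 by [].
rewrite e1 in h2 h4.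
set u := Kr * fracr a in h1 h2 *; set w := Kr * fracr b in h3 h4 *.
set t := (Num.floor w)%:~R in h1 h2 h3 h4; apply/andP; split; lra.
Qed.
End B.

End Helpers.
Import Helpers.

Theorem lemmaB3 (R : realType) (n : nat) (Gamma : set 'cV[int]_n)
  (eps delta : R) (A : 'M[R]_n) :
  almost_periodic_pattern R Gamma -> 0 < eps -> 0 < delta -> A \in unitmx ->
  exists Red : R, 0 < Red /\
  exists N : set 'cV[int]_n, relatively_dense R N /\
    (forall r : R, Red <= r -> forall v, N v ->
       densUp r (symdiff (translate Gamma v) Gamma) < eps) /\
    (forall v, N v -> dist_Zn (A *m intv R v) < delta) /\
    (forall i : 'I_n, in_IQ A i -> forall v, N v ->
       exists k : int, (A *m intv R v) i 0 = k%:~R).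
Proof.
move=> [_ hap] eps0 delta0 _.
have eps2 : 0 < eps / 2 by rewrite divr_gt0.
have [Re [Re0 [N [[R0 [R00 hN]] hNd]]]] := hap _ eps2.
have hq : forall p : 'I_n * 'I_n, exists q : rat, in_IQ A p.1 -> A p.1 p.2 = ratr q.
  move=> p; have [h|h] := pselect (in_IQ A p.1); last by exists 0.
  by have [q hq] := h p.2; exists q.
case: (boolp.choice hq) => qf hqf.
have [D [D0 hD]] := common_den [seq qf p | p <- enum {: 'I_n * 'I_n}].
have hDA : forall i, in_IQ A i -> forall j, exists k : int, D%:R * A i j = k%:~R.
  move=> i hi j; have [k hk] := hD (qf (i, j)) (map_f _ (mem_enum _ _)).
  exists k; rewrite (hqf (i, j) hi) /=.
  by move/(congr1 (@ratr R)): hk; rewrite rmorphM /= rmorph_nat ratr_int.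
set K := (D + `|Num.ceil delta^-1|%N)%N.
set Kr : R := (K.+1)%:R.
have Kr0 : 0 < Kr by rewrite ltr0n.
have hKD : D%:R <= Kr by rewrite ler_nat /K; apply: leqW; apply: leq_addr.
have hKd : Kr^-1 < delta.
  rewrite invf_plt ?posrE //; apply: (le_lt_trans (ceil_ge _)).
  apply: (le_lt_trans (ler_norm _)); rewrite -intr_norm.
  have -> : (`|Num.ceil delta^-1|)%:~R = (`|Num.ceil delta^-1|%N)%:R :> R by rewrite natr_absz.
  by rewrite ltr_nat ltnS /K leq_addl.
pose cls (v : 'cV[int]_n) : {ffun 'I_n -> 'I_K.+1} :=
  [ffun i => inord (bin K ((A *m intv R v) i 0))].
have hw : forall c, exists w, (exists v, N v /\ cls v = c) -> N w /\ cls w = c.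
  move=> c; have [[v hv]|h] := pselect (exists v, N v /\ cls v = c); last by exists 0.
  by exists v.
case: (boolp.choice hw) => wsel hwsel.
set W := \big[Num.max/0]_(c : {ffun 'I_n -> 'I_K.+1}) supnorm (intv R (wsel c)).
have W0 : 0 <= W.
  apply: (big_ind (fun y => 0 <= y)) => //; last by move=> c _; apply: supnorm_ge0.
  by move=> a b ha hb; rewrite le_max ha.
have hW : forall c, supnorm (intv R (wsel c)) <= W by move=> c; apply: le_bigmax.
have wN : forall v, N v -> N (wsel (cls v)) /\ cls (wsel (cls v)) = cls v.
  by move=> v hv; apply: hwsel; exists v.
have key : forall v, N v -> forall i,
  `|(A *m intv R (v - wsel (cls v))) i 0 -
    (Num.floor ((A *m intv R v) i 0) - Num.floor ((A *m intv R (wsel (cls v))) i 0))%:~R| < Kr^-1.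
  move=> v hv i; have [_ hc] := wN v hv.
  have hb : bin K ((A *m intv R (wsel (cls v))) i 0) = bin K ((A *m intv R v) i 0).
    have := congr1 (fun f : {ffun 'I_n -> 'I_K.+1} => nat_of_ord (f i)) hc; rewrite /= /cls !ffunE.
    by rewrite !inordK ?bin_lt.
  have eB : forall (P Q : 'cV[R]_n), (P - Q) i 0 = P i 0 - Q i 0 by move=> P Q; rewrite !mxE.
  rewrite intvB mulmxBr eB.
  by apply: bin_eq; rewrite hb.
exists Re; split => //.
exists [set u | exists v, N v /\ u = v - wsel (cls v)]; split; [|split; [|split]].
- exists (R0 + W); split; first by rewrite ltr_wpDr.
  move=> x r hr; have [v [hv1 hv2]] := hN x R0 (lexx _).
  exists (v - wsel (cls v)); split; last by exists v.
  rewrite /zball /= intvB opprB addrA addrAC.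
  apply: (le_lt_trans (supnormD _ _)); apply: lt_le_trans hr.
  by apply: ltr_leD; [exact: hv1 | exact: hW].
- move=> r hr _ [v [hv ->]]; have [hw1 _] := wN v hv.
  by apply: dens_diff; apply: hNd.
- move=> _ [v [hv ->]].
  set z : 'cV[int]_n := \col_i (Num.floor ((A *m intv R v) i 0) - Num.floor ((A *m intv R (wsel (cls v))) i 0)).
  apply: (le_lt_trans (y := supnorm (A *m intv R (v - wsel (cls v)) - intv R z))).
    have hlb : has_lbound [set d : R | exists z : 'cV[int]_n, d = supnorm (A *m intv R (v - wsel (cls v)) - intv R z)].
      by exists 0 => _ [z' ->]; apply: supnorm_ge0.
    by apply: (ge_inf hlb); exists z.
  have eC : forall (P : 'cV[R]_n) (z : 'cV[int]_n) i, (P - intv R z) i 0 = P i 0 - (z i 0)%:~R.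
    by move=> P z' j; rewrite !mxE.
  apply: supnorm_lt => // i; rewrite eC [z i 0]mxE.
  exact: lt_trans (key v hv i) hKd.
- move=> i hi _ [v [hv ->]].
  set m := (Num.floor ((A *m intv R v) i 0) - Num.floor ((A *m intv R (wsel (cls v))) i 0)).
  exists m.
  have hk := key v hv i; rewrite -/m in hk.
  have [k hkD] := row_int (hDA i hi) (v - wsel (cls v)).
  set a := (A *m intv R (v - wsel (cls v))) i 0 in hk hkD *.
  have hD0 : 0 < (D%:R : R) by rewrite ltr0n.
  have e : D%:R * (a - m%:~R) = (k - D%:Z * m)%:~R by rewrite mulrBr hkD intrB intrM.
  have h1 : `|(k - D%:Z * m)%:~R : R| < 1.
    rewrite -e normrM ger0_norm ?ltW //.
    apply: (lt_le_trans (y := D%:R * Kr^-1)); first by rewrite ltr_pM2l.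
    by rewrite ler_pdivrMr // mul1r.
  have h0 : (k - D%:Z * m) = 0.
    move: h1; rewrite -intr_norm -[1 : R]/((1:int)%:~R) ltr_int.
    set j := k - _; lia.
  move: e; rewrite h0 => /eqP; rewrite mulf_eq0 (gt_eqF hD0) /= subr_eq0.
  by move=> /eqP.

Qed.
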